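(* Let $L$ be the Kirchhoff matrix of a weighted digraph $\Gamma$, let $\varepsilon>0$ be such that $P=I-\varepsilon L$ is row stochastic, and let $P^{\infty}=\lim_{m\to\infty}\frac1m\sum_{i=1}^m P^i$ (Ces\`aro limit). Then $P^{\infty}=\bar J$, the normalized matrix of maximum out-forests of $\Gamma$.
   Context: A weighted digraph $\Gamma$ has vertex set $\{1,\dots,n\}$, no loops, and each arc $j\to i$ ($j\ne i$) has a positive weight $a_{ij}$; $a_{ij}=0$ if there is no such arc. Its Kirchhoff matrix $L=[\ell_{ij}]$ has $\ell_{ij}=-a_{ij}$ for $j\ne i$ and $\ell_{ii}=\sum_{k\ne i}a_{ik}$. An out-forest of $\Gamma$ is a spanning subgraph whose weak components are diverging trees (rooted directed trees with paths from the root to all vertices); a maximum out-forest is one with the maximum number of arcs. The weight of a subgraph is the product of its arc weights. The normalized matrix of maximum out-forests $\bar J$ has $\bar J_{ij}$ equal to the total weight of the maximum out-forests of $\Gamma$ in which $i$ belongs to the tree rooted at $j$, divided by the total weight of all maximum out-forests. *)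

(* Defs.v *)
From HB Require Import structures.
From mathcomp Require Import all_boot all_order all_algebra.
Set Implicit Arguments. Unset Strict Implicit. Unset Printing Implicit Defensive.
Import Order.TTheory GRing.Theory Num.Theory.
Local Open Scope ring_scope.

(* Weighted digraph on vertices 'I_n given by a weight matrix a : 'M[R]_n,
   where an arc j -> i exists iff 0 < a i j (a i j = 0 otherwise; a i i = 0).
   A spanning subgraph is represented by its arc set F, an arc j -> i being
   the pair (j, i). *)

Section Forests.
Variables (R : numDomainType) (n : nat).
Implicit Types (a : 'M[R]_n) (F : {set 'I_n * 'I_n}).

Definition kirchhoff a : 'M[R]_n :=
  \matrix_(i, j) (if i == j then \sum_(k < n | k != i) a i k else - a i j).

Definition subgraphb a F : bool := [forall e in F, 0 < a e.2 e.1].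

Definition darc F : rel 'I_n := fun x y => (x, y) \in F.
Definition uarc F : rel 'I_n := fun x y => ((x, y) \in F) || ((y, x) \in F).

Definition wcomp F (x : 'I_n) : {set 'I_n} := [set y | connect (uarc F) x y].

(* the weak component C is a diverging tree: it is a tree (connected with
   |C| - 1 arcs) having a root from which every vertex of C is reachable *)
Definition diverging_tree_comp F (C : {set 'I_n}) : bool :=
  (#|[set e in F | e.1 \in C]| == #|C| - 1)%N &&
  [exists r in C, forall y in C, connect (darc F) r y].

Definition out_forest a F : bool :=
  subgraphb a F && [forall x, diverging_tree_comp F (wcomp F x)].

Definition max_out_forest a F : bool :=
  out_forest a F && [forall G : {set 'I_n * 'I_n}, out_forest a G ==> (#|G| <= #|F|)%N].

Definition sg_weight a F : R := \prod_(e in F) a e.2 e.1.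

Definition in_tree_rooted_at F (i j : 'I_n) : bool :=
  connect (uarc F) i j && [forall y, connect (uarc F) i y ==> connect (darc F) j y].

End Forests.

Section Jbar.
Variables (R : numFieldType) (n : nat).

Definition Jbar (a : 'M[R]_n) : 'M[R]_n :=
  \matrix_(i, j)
    ((\sum_(F : {set 'I_n * 'I_n} | max_out_forest a F && in_tree_rooted_at F i j)
        sg_weight a F) /
     (\sum_(F : {set 'I_n * 'I_n} | max_out_forest a F) sg_weight a F)).

Definition cesaro_mean (P : 'M[R]_n) (m : nat) : 'M[R]_n :=
  (m%:R)^-1 *: \sum_(1 <= k < m.+1) P ^+ k.

Definition cesaro_limit (P Q : 'M[R]_n) : Prop :=
  forall e : R, 0 < e -> exists N : nat, forall m : nat, (N < m)%N ->
    forall i j, `|cesaro_mean P m i j - Q i j| < e.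

Definition row_stochastic (P : 'M[R]_n) : Prop :=
  (forall i j, 0 <= P i j) /\ (forall i, \sum_j P i j = 1).

End Jbar.

(* Main.v *)
Require Import Defs.
From HB Require Import structures.
From mathcomp Require Import all_boot all_order all_algebra.
Set Implicit Arguments. Unset Strict Implicit. Unset Printing Implicit Defensive.
Import Order.TTheory GRing.Theory Num.Theory.

Section G.
Variable n : nat.
Local Notation T := 'I_n.
Implicit Types (F G : {set T * T}) (x y z u v : T).

Lemma connect_rel (e P : rel T) :
  reflexive P -> transitive P -> subrel e P -> subrel (connect e) P.
Proof.
move=> Pr Pt sub x y /connectP [p pth ->]; elim: p x pth => [|z p IH] x /=.
  by move=> _; apply: Pr.
by case/andP=> exz pz; apply: (Pt z); [apply: sub | apply: IH].
Qed.

Lemma connect_last (e : rel T) x y : connect e x y -> x != y ->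
  exists z, connect e x z /\ e z y.
Proof.
case/connectP=> p; elim/last_ind: p => [|p z _] /=; first by move=> _ -> ; rewrite eqxx.
rewrite rcons_path last_rcons => /andP [pp ez] -> _.
by exists (last x p); split => //; apply/connectP; exists p.
Qed.

Definition indeg1 F := [forall y, forall x, forall x', ((x, y) \in F) ==> ((x', y) \in F) ==> (x == x')].
Definition isroot F r := [forall x, (x, r) \notin F].
Definition hasroots F := [forall v, exists r, isroot F r && connect (darc F) r v].
Definition inT F i j := isroot F j && connect (darc F) j i.

Lemma indeg1P F x x' y : indeg1 F -> (x, y) \in F -> (x', y) \in F -> x = x'.
Proof. by move=> /forallP /(_ y) /forallP /(_ x) /forallP /(_ x') /implyP H /H /implyP H' /H' /eqP. Qed.

Lemma isrootP F r x : isroot F r -> (x, r) \in F = false.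
Proof. by move=> /forallP /(_ x) /negbTE. Qed.

Lemma root_anc F x r : isroot F r -> connect (darc F) x r -> x = r.
Proof.
move=> rr c; case: (eqVneq x r) => // xr; case: (connect_last c xr) => z [_ ezr].
by rewrite /darc isrootP in ezr.
Qed.

Lemma chain F x y v : indeg1 F -> connect (darc F) x v -> connect (darc F) y v ->
  connect (darc F) x y \/ connect (darc F) y x.
Proof.
move=> ind /connectP [p]; elim/last_ind: p v => [|p z IH] v /=.
  by move=> _ -> yx; right.
rewrite rcons_path last_rcons => /andP [pp ez] -> yz.
case: (eqVneq y z) => [->|yz']; first by left; apply/connectP; exists (rcons p z); rewrite ?rcons_path ?pp ?last_rcons.
case: (connect_last yz yz') => u [yu euz].
have eu : u = last x p by apply: (indeg1P ind euz ez).
by apply: (IH (last x p)) => //; rewrite -eu.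
Qed.

Lemma inT_unique F i j j' : indeg1 F -> inT F i j -> inT F i j' -> j = j'.
Proof.
move=> ind /andP [rj cj] /andP [rj' cj'].
case: (chain ind cj cj') => c; first exact: (root_anc rj' c).
exact/esym/(root_anc rj c).
Qed.

Lemma hasrootsP F v : hasroots F -> exists r, inT F v r.
Proof. by move=> /forallP /(_ v) /existsP [r H]; exists r. Qed.

Definition cyclic F y := exists w, (w, y) \in F /\ connect (darc F) y w.

Lemma cyclic_pred F w y : cyclic F y -> (w, y) \in F -> indeg1 F -> cyclic F w.
Proof.
move=> [w' [ew' cyw']] ewy ind; have <- := indeg1P ind ew' ewy.
case: (eqVneq y w') => [e|ne]; first by subst w'; exists y; split; [exact: ew' | exact: connect0].
case: (connect_last cyw' ne) => u [cyu euw']; exists u; split => //.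
exact: connect_trans (connect1 (ew' : darc F w' y)) cyu.
Qed.

Lemma cyclic_anc F u y : indeg1 F -> cyclic F y -> connect (darc F) u y -> connect (darc F) y u.
Proof.
move=> ind cy /connectP [p]; elim/last_ind: p y cy => [|p z IH] y cy /=.
  by move=> _ ->.
rewrite rcons_path last_rcons => /andP [pp ez] yz; subst y.
have cl := cyclic_pred cy ez ind.
have := IH _ cl pp erefl; apply: connect_trans.
by case: cy => w [ewz czw]; rewrite -(indeg1P ind ewz ez).
Qed.

Lemma noCycle F x y : indeg1 F -> hasroots F -> (x, y) \in F -> connect (darc F) y x -> False.
Proof.
move=> ind hr exy cyx; have cy : cyclic F y by exists x.
case: (hasrootsP y hr) => r /andP [rr cry].
have cyr := cyclic_anc ind cy cry.
have yr := root_anc rr cyr; by rewrite yr isrootP in exy.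
Qed.

Lemma inT_conn F x y j : indeg1 F -> hasroots F -> connect (darc F) x y -> inT F y j = inT F x j.
Proof.
move=> ind hr cxy; case: (hasrootsP x hr) => r /[dup] rx /andP [rr crx].
have ry : inT F y r by rewrite /inT rr (connect_trans crx cxy).
apply/idP/idP => H.
- by rewrite (inT_unique ind H ry).
- by rewrite (inT_unique ind H rx).
Qed.

Lemma inT_root F i j : isroot F i -> inT F i j = (j == i).
Proof.
move=> ri; apply/idP/eqP => [/andP [rj cji]|->]; first exact: (root_anc ri cji).
by rewrite /inT ri connect0.
Qed.

End G.

Section G2.
Variable n : nat.
Local Notation T := 'I_n.
Implicit Types (F G : {set T * T}) (x y z u v : T).

Lemma uarc_sym F : symmetric (uarc F).
Proof. by move=> x y; rewrite /uarc orbC. Qed.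

Lemma uconnect_sym F x y : connect (uarc F) x y -> connect (uarc F) y x.
Proof.
apply: (connect_rel (P := fun x y => connect (uarc F) y x)).
- by move=> z; apply: connect0.
- by move=> b c d H1 H2; apply: connect_trans H2 H1.
- by move=> b c H; apply: connect1; rewrite uarc_sym.
Qed.

Lemma dsub_u F x y : connect (darc F) x y -> connect (uarc F) x y.
Proof. by apply: connect_sub => b c H; apply: connect1; apply/orP; left. Qed.

Definition sameroot F x y := [exists r, inT F x r && inT F y r].

Lemma uconnect_same F x y : indeg1 F -> hasroots F ->
  connect (uarc F) x y = sameroot F x y.
Proof.
move=> ind hr; apply/idP/idP.
- apply: connect_rel.
  + by move=> z; case: (hasrootsP z hr) => r H; apply/existsP; exists r; rewrite H.
  + move=> b c d /existsP [r /andP [H1 H2]] /existsP [r' /andP [H3 H4]].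
    by apply/existsP; exists r; rewrite H1 (inT_unique ind H2 H3) H4.
  + move=> b c /orP [] e; case: (hasrootsP b hr) => r H; apply/existsP; exists r;
      rewrite H /=.
    * by rewrite (@inT_conn _ F b c r ind hr) // connect1.
    * by rewrite -(@inT_conn _ F c b r ind hr) // connect1.
- case/existsP=> r /andP [/andP [_ H1] /andP [_ H2]].
  exact: connect_trans (uconnect_sym (dsub_u H1)) (dsub_u H2).
Qed.

Lemma in_tree_inT F i j : indeg1 F -> hasroots F -> in_tree_rooted_at F i j = inT F i j.
Proof.
move=> ind hr; rewrite /in_tree_rooted_at; apply/idP/idP.
- case/andP=> _ /forallP H; case: (hasrootsP i hr) => r /[dup] ir /andP [rr cri].
  have : connect (darc F) j r.
    apply: (implyP (H r)); rewrite uconnect_same //; apply/existsP; exists r.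
    by rewrite ir /inT rr connect0.
  by move/(root_anc rr) => ->.
- move=> /[dup] ij /andP [rj cji]; rewrite uconnect_same //; apply/andP; split.
    by apply/existsP; exists j; rewrite ij /inT rj connect0.
  apply/forallP => y; apply/implyP.
  rewrite uconnect_same // => /existsP [r /andP [H1 H2]].
  by rewrite (inT_unique ind ij H1); case/andP: H2.
Qed.

Section OF.
Variable R : numDomainType.
Variable a : 'M[R]_n.

Definition pf F := [&& subgraphb a F, indeg1 F & hasroots F].

Lemma comp_props F x : diverging_tree_comp F (wcomp F x) ->
  exists r, [/\ isroot F r, r \in wcomp F x, (forall y, y \in wcomp F x -> connect (darc F) r y)
      & {in [set e in F | e.1 \in wcomp F x] &, injective (@snd T T)}].
Proof.
set C := wcomp F x; set S := [set e in F | e.1 \in C].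
case/andP=> /eqP cS /existsP [r /andP [rC /forallP rall]].
have rallP : forall y, y \in C -> connect (darc F) r y by move=> y yC; apply: (implyP (rall y)).
have inC : forall e, e \in F -> (e.1 \in C) = (e.2 \in C).
  move=> [b c] eF /=; rewrite !inE; apply/idP/idP => H.
  - by apply: connect_trans H (connect1 _); rewrite /uarc eF.
  - by apply: connect_trans H (connect1 _); rewrite /uarc eF orbT.
have sub1 : C :\ r \subset (@snd T T) @: S.
  apply/subsetP=> y /setD1P [yr yC].
  have ry : r != y by rewrite eq_sym.
  case: (connect_last (rallP y yC) ry) => z [crz ezy].
  apply/imsetP; exists (z, y) => //; rewrite inE (ezy : (z, y) \in F) /=.
  by move: rC; rewrite !inE => H; apply: connect_trans H (dsub_u crz).
have cCr : #|C :\ r| = (#|C| - 1)%N by rewrite (cardsD1 r C) rC add1n subn1.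
have le1 := subset_leq_card sub1.
have le2 : #|(@snd T T) @: S| <= #|S| := leq_imset_card _ _.
have eqc : #|(@snd T T) @: S| = #|S| by apply/eqP; rewrite eqn_leq le2 cS -cCr le1.
have imeq : C :\ r = (@snd T T) @: S.
  by apply/eqP; rewrite eqEcard sub1 eqc cS -cCr leqnn.
exists r; split => //.
- apply/forallP => z; apply/negP => zr.
  have : r \in (@snd T T) @: S.
    apply/imsetP; exists (z, r) => //; rewrite inE zr /=.
    by have := inC (z, r) zr; rewrite /= => ->.
  by rewrite -imeq !inE eqxx.
- by apply/imset_injP; rewrite eqc.
Qed.

Lemma out_forest_pf F : out_forest a F = pf F.
Proof.
apply/idP/idP.
- case/andP=> sg /forallP dt; rewrite /pf sg /=; apply/andP; split.
  + apply/forallP=> y; apply/forallP=> x1; apply/forallP=> x2; apply/implyP=> e1; apply/implyP=> e2.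
    case: (comp_props (dt x1)) => r [_ _ _ inj].
    have m1 : (x1, y) \in [set e in F | e.1 \in wcomp F x1] by rewrite !inE e1 /= connect0.
    have m2 : (x2, y) \in [set e in F | e.1 \in wcomp F x1].
      rewrite inE e2 /= inE; apply: (@connect_trans _ _ y); apply: connect1.
        by rewrite /uarc e1.
      by rewrite /uarc e2 orbT.
    by have := inj _ _ m1 m2 erefl; case=> ->.
  + apply/forallP=> v; case: (comp_props (dt v)) => r [rr _ H _].
    by apply/existsP; exists r; rewrite rr H // inE connect0.
- case/and3P=> sg ind hr; rewrite /out_forest sg /=; apply/forallP=> x.
  case: (hasrootsP x hr) => r /[dup] xr /andP [rr crx].
  have Cdef : forall y, (y \in wcomp F x) = inT F y r.
    move=> y; rewrite inE uconnect_same //; apply/existsP/idP => [[r' /andP [H1 H2]]|H].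
      by rewrite (inT_unique ind xr H1).
    by exists r; rewrite xr H.
  rewrite /diverging_tree_comp; apply/andP; split; last first.
    apply/existsP; exists r; rewrite Cdef /inT rr connect0 /=.
    by apply/forallP => y; apply/implyP; rewrite Cdef => /andP [].
  set C := wcomp F x; set S := [set e in F | e.1 \in C].
  have imeq : (@snd T T) @: S = C :\ r.
    apply/setP=> y; rewrite in_setD1 Cdef; apply/imsetP/andP => [[[b c] ]|[yr /andP [_ cry]]].
      rewrite inE /= Cdef => /andP [bc /andP [_ crb]] ->; split.
        by apply/eqP => cr; rewrite cr isrootP in bc.
      by rewrite /inT rr (connect_trans crb (connect1 _)).
    case: (connect_last cry _) => [|z [crz ezy]]; first by rewrite eq_sym.
    by exists (z, y) => //; rewrite inE (ezy : (z, y) \in F) /= Cdef /inT rr crz.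
  have inj : {in S &, injective (@snd T T)}.
    move=> [b c] [b' c'] ; rewrite !inE /= => /andP [e1 _] /andP [e2 _] ec.
    by subst c'; rewrite (indeg1P ind e1 e2).
  rewrite -(card_in_imset inj) imeq (cardsD1 r C) Cdef /inT rr connect0 /=.
  by rewrite add1n subn1.
Qed.

End OF.
End G2.

Section G3.
Variable n : nat.
Local Notation T := 'I_n.
Implicit Types (F G : {set T * T}) (x y z u v : T).

Lemma connect_mono F G x y : F \subset G -> connect (darc F) x y -> connect (darc G) x y.
Proof. by move=> sFG; apply: connect_sub => b c H; apply: connect1; apply: (subsetP sFG). Qed.

Lemma connect_add F u v x y : connect (darc ((u, v) |: F)) x y ->
  connect (darc F) x y || (connect (darc F) x u && connect (darc F) v y).
Proof.
move: x y; apply: (connect_rel (P := fun x y => connect (darc F) x y || (connect (darc F) x u && connect (darc F) v y))).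
- by move=> z; rewrite connect0.
- move=> b c d /orP [H1|/andP [H1 H2]] /orP [H3|/andP [H3 H4]].
  + by rewrite (connect_trans H1 H3).
  + by rewrite (connect_trans H1 H3) H4 orbT.
  + by rewrite H1 (connect_trans H2 H3) orbT.
  + by rewrite H1 H4 orbT.
- move=> b c; rewrite /darc in_setU1 => /orP [/eqP [-> ->]|H].
  + by rewrite !connect0 orbT.
  + by rewrite connect1.
Qed.

Lemma root_add F u v r : r != v -> isroot ((u, v) |: F) r = isroot F r.
Proof.
move=> rv; apply/forallP/forallP => H x; move: (H x);
  by rewrite in_setU1 // xpair_eqE (negbTE rv) andbF.
Qed.

Lemma root_sub F G r : F \subset G -> isroot G r -> isroot F r.
Proof.
move=> sFG /forallP H; apply/forallP => x; apply/negP => xF.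
by move: (H x); rewrite (subsetP sFG _ xF).
Qed.

Lemma indeg1_sub F G : F \subset G -> indeg1 G -> indeg1 F.
Proof.
move=> sFG ind; apply/forallP=> y; apply/forallP=> x; apply/forallP=> x'.
apply/implyP=> e1; apply/implyP=> e2; apply/eqP.
exact: (indeg1P ind (subsetP sFG _ e1) (subsetP sFG _ e2)).
Qed.

Lemma indeg1_add F l i : indeg1 F -> isroot F i -> indeg1 ((l, i) |: F).
Proof.
move=> ind ri; apply/forallP=> y; apply/forallP=> x; apply/forallP=> x'.
rewrite !in_setU1 !xpair_eqE.
case H1: ((x, y) \in F); case H2: ((x', y) \in F); rewrite /= ?orbT ?orbF.
- by apply/implyP => _; apply/implyP => _; apply/eqP; apply: (indeg1P ind H1 H2).
- apply/implyP => _; apply/implyP => /andP [/eqP -> /eqP yi]; subst y.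
  by rewrite isrootP in H1.
- apply/implyP => /andP [/eqP -> /eqP yi]; subst y.
  by rewrite isrootP in H2.
- by apply/implyP => /andP [/eqP -> _]; apply/implyP => /andP [/eqP -> _].
Qed.

Lemma hasroots_add F l i : indeg1 F -> hasroots F -> isroot F i -> ~~ connect (darc F) i l ->
  hasroots ((l, i) |: F).
Proof.
move=> ind hr ri nil; have sub : F \subset (l, i) |: F by apply: subsetUr.
apply/forallP => v; case: (hasrootsP v hr) => r /andP [rr crv].
case: (eqVneq r i) => [ei|ne].
- subst r; case: (hasrootsP l hr) => r' /andP [rr' cr'l].
  have ne' : r' != i by apply/eqP => e; subst r'; rewrite cr'l in nil.
  apply/existsP; exists r'; rewrite root_add // rr' /=.
  apply: connect_trans (connect_mono sub cr'l) _.
  apply: connect_trans (connect1 _) (connect_mono sub crv).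
  by rewrite /darc setU11.
- apply/existsP; exists r; rewrite root_add // rr /=.
  exact: connect_mono sub crv.
Qed.

Lemma inT_add F l i j : indeg1 F -> isroot F i -> ~~ connect (darc F) i l ->
  inT ((l, i) |: F) i j = inT F l j.
Proof.
move=> ind ri nil; have sub : F \subset (l, i) |: F by apply: subsetUr.
apply/idP/idP.
- case/andP=> rj /connect_add /orP [cji|/andP [cjl _]].
  + have ji := root_anc ri cji; subst j.
    by move: rj => /forallP /(_ l); rewrite setU11.
  + by rewrite /inT (root_sub sub rj) cjl.
- case/andP=> rj cjl.
  have ne : j != i by apply/eqP => e; subst j; rewrite cjl in nil.
  rewrite /inT root_add // rj /=.
  apply: connect_trans (connect_mono sub cjl) (connect1 _).
  by rewrite /darc setU11.
Qed.

Section OF3.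
Local Open Scope ring_scope.
Variable R : numDomainType.
Variable a : 'M[R]_n.

Definition wt F : R := \prod_(e in F) a e.2 e.1.

Lemma wt_add F l i : (l, i) \notin F -> wt ((l, i) |: F) = a i l * wt F.
Proof. by move=> H; rewrite /wt big_setU1. Qed.

Lemma subgraph_add F l i : subgraphb a F -> 0 < a i l -> subgraphb a ((l, i) |: F).
Proof.
move=> /forallP sg pos; apply/forallP => e; apply/implyP; rewrite in_setU1 => /orP [/eqP -> //|eF].
exact: (implyP (sg e)).
Qed.

Lemma subgraph_sub F G : F \subset G -> subgraphb a G -> subgraphb a F.
Proof.
move=> sFG /forallP sg; apply/forallP => e; apply/implyP => eF.
exact: (implyP (sg e) (subsetP sFG _ eF)).
Qed.

Lemma pf_add F l i : pf a F -> isroot F i -> ~~ connect (darc F) i l -> 0 < a i l ->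
  pf a ((l, i) |: F).
Proof.
case/and3P=> sg ind hr ri nil pos.
by rewrite /pf subgraph_add // indeg1_add // hasroots_add.
Qed.

Lemma connect_del F u v x y : (u, v) \in F -> connect (darc F) x y ->
  connect (darc (F :\ (u, v))) x y || connect (darc (F :\ (u, v))) v y.
Proof.
move=> uvF; move: x y; apply: (connect_rel (P := fun x y => connect (darc (F :\ (u, v))) x y || connect (darc (F :\ (u, v))) v y)).
- by move=> z; rewrite connect0.
- move=> b c d /orP [H1|H1] /orP [H3|H3].
  + by rewrite (connect_trans H1 H3).
  + by rewrite H3 orbT.
  + by rewrite (connect_trans H1 H3) orbT.
  + by rewrite H3 orbT.
- move=> b c bc; case: (eqVneq (b, c) (u, v)) => [[_ ->]|ne].
  + by rewrite connect0 orbT.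
  + by rewrite connect1 // /darc in_setD1 ne.
Qed.

Lemma pf_del G l i : pf a G -> (l, i) \in G ->
  [/\ pf a (G :\ (l, i)), isroot (G :\ (l, i)) i, ~~ connect (darc (G :\ (l, i))) i l,
      0 < a i l & l != i].
Proof.
case/and3P=> sg ind hr liG; set F := G :\ (l, i).
have sub : F \subset G by apply: subsetDl.
have ri : isroot F i.
  apply/forallP => x; rewrite in_setD1; apply/negP => /andP [ne xi].
  by rewrite (indeg1P ind xi liG) eqxx in ne.
have nil : ~~ connect (darc F) i l.
  by apply/negP => c; apply: (noCycle ind hr liG (connect_mono sub c)).
have pos : 0 < a i l by exact: (implyP (forallP sg (l, i)) liG).
have li : l != i by apply/eqP => e; subst l; apply: (noCycle ind hr liG (connect0 _ _)).
split => //; rewrite /pf (subgraph_sub sub sg) (indeg1_sub sub ind) /=.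
apply/forallP => v; case: (hasrootsP v hr) => r /andP [rr crv].
case/orP: (connect_del liG crv) => c.
- by apply/existsP; exists r; rewrite (root_sub sub rr) c.
- by apply/existsP; exists i; rewrite ri c.
Qed.

End OF3.
End G3.

Section G4.
Local Open Scope ring_scope.
Variable n : nat.
Local Notation T := 'I_n.
Implicit Types (F G : {set T * T}) (x y z u v : T).
Variable R : numDomainType.
Variable a : 'M[R]_n.

Definition par F i := odflt i [pick x | (x, i) \in F].

Lemma parP F p i : indeg1 F -> (p, i) \in F -> par F i = p.
Proof.
move=> ind pi; rewrite /par; case: pickP => [x xi|/(_ p)]; last by rewrite pi.
exact: (indeg1P ind xi pi).
Qed.

Lemma nonroot_par F i : ~~ isroot F i -> (par F i, i) \in F.
Proof.
rewrite /isroot negb_forall => /existsP [x]; rewrite negbK => xi.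
by rewrite /par; case: pickP => [y //|/(_ x)]; rewrite xi.
Qed.

Definition swp F i l := (l, i) |: (F :\ (par F i, i)).

Lemma swap_props F p i l : pf a F -> (p, i) \in F -> ~~ connect (darc F) i l ->
  0 < a i l -> l != p ->
  [/\ pf a (swp F i l), (l, i) \in swp F i l, ~~ connect (darc (swp F i l)) i p,
      par (swp F i l) i = l & swp (swp F i l) i p = F] /\
   [/\ #|swp F i l| = #|F|,
      (forall j, inT (swp F i l) i j = inT F l j) &
      (forall j, inT (swp F i l) p j = inT F i j)].
Proof.
move=> /[dup] pF /and3P [sg ind hr] piF nil pos lp.
have parp : par F i = p by apply: parP.
rewrite /swp parp; set F0 := F :\ (p, i); set F2 := (l, i) |: F0.
have sub0 : F0 \subset F by apply: subsetDl.
have sub2 : F0 \subset F2 by apply: subsetUr.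
have eF : F = (p, i) |: F0 by rewrite setD1K.
case: (pf_del pF piF) => pF0 ri0 nip0 posp pi.
have nil0 : ~~ connect (darc F0) i l by apply/negP => /(connect_mono sub0); apply/negP.
have pF2 : pf a F2 by apply: pf_add.
have liF0 : (l, i) \notin F0.
  by apply/negP => /(subsetP sub0) H; rewrite (indeg1P ind H piF) eqxx in lp.
have ind2 : indeg1 F2 by case/and3P: pF2.
have hr2 : hasroots F2 by case/and3P: pF2.
have nip2 : ~~ connect (darc F2) i p.
  apply/negP => /connect_add /orP [c|/andP [c _]].
  - by rewrite c in nip0.
  - by rewrite c in nil0.
have ri : ~~ isroot F i by apply/negP => r0; rewrite isrootP in piF.
have ri2 : ~~ isroot F2 i by apply/negP => r0; move: (isrootP l r0); rewrite setU11.
have keep : forall x j, ~~ connect (darc F) i x -> inT F2 x j = inT F x j.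
  move=> x j nix; apply/idP/idP => /andP [rj cjx].
  - have ji : j != i by apply/eqP => e; subst j; rewrite rj in ri2.
    case/orP: (connect_add cjx) => [c|/andP [_ c]]; last first.
      by rewrite (connect_mono sub0 c) in nix.
    rewrite /inT (connect_mono sub0 c) andbT eF root_add //.
    exact: (root_sub sub2 rj).
  - have ji : j != i by apply/eqP => e; subst j; rewrite rj in ri.
    move: cjx; rewrite {1}eF => /connect_add /orP [c|/andP [_ c]]; last first.
      by rewrite (connect_mono sub0 c) in nix.
    rewrite /inT (connect_mono sub2 c) andbT root_add //.
    by rewrite eF root_add // in rj.
have nip : ~~ connect (darc F) i p by apply/negP => c; apply: (noCycle ind hr piF c).
split; split => //.
- by rewrite setU11.
- by apply: parP; rewrite ?setU11.
- rewrite (parP ind2 (setU11 _ _)) setU1K //.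
- by rewrite cardsU1 liF0 (cardsD1 (p, i) F) piF.
- move=> j; rewrite (@inT_conn _ F2 l i j ind2 hr2); last by apply: connect1; rewrite /darc setU11.
  by apply: keep.
- move=> j; rewrite keep //; apply/esym/(@inT_conn _ F p i j ind hr).
  exact: connect1 (piF : darc F p i).
Qed.

End G4.

Section G5.
Local Open Scope ring_scope.
Variable n : nat.
Local Notation T := 'I_n.
Implicit Types (F G : {set T * T}) (x y z u v : T).
Variable R : numDomainType.
Variable a : 'M[R]_n.
Hypothesis ha : forall i j, 0 <= a i j.

Definition Fk k F := pf a F && (#|F| == k)%N.
Definition Qk k i j := \sum_(F | Fk k F && inT F i j) wt a F.
Definition Sg k := \sum_(F | Fk k F) wt a F.
Definition gg i j (q : {set T * T} * T) : R :=
  a i q.2 * (wt a q.1 * ((inT q.1 i j)%:R - (inT q.1 q.2 j)%:R)).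

Lemma L_Q k i j : Qk k i j = \sum_(F | Fk k F) wt a F * (inT F i j)%:R.
Proof.
rewrite /Qk big_mkcondr /=; apply: eq_bigr => F _.
by case: (inT F i j); rewrite ?mulr1 ?mulr0.
Qed.

Lemma L_RHS k i j : \sum_(l | l != i) a i l * (Qk k i j - Qk k l j) =
  \sum_(q | Fk k q.1 && (q.2 != i)) gg i j q.
Proof.
have -> : \sum_(l | l != i) a i l * (Qk k i j - Qk k l j) =
          \sum_(l | l != i) \sum_(F | Fk k F) gg i j (F, l).
  apply: eq_bigr => l _; rewrite !L_Q -sumrB mulr_sumr; apply: eq_bigr => F _.
  by rewrite /gg /= [in RHS]mulrBr.
rewrite exchange_big pair_big /=; apply: eq_bigr => [[F l]] _ //.
Qed.

Lemma L_LHS k i j : Sg k.+1 * (i == j)%:R - Qk k.+1 i j =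
  \sum_(q | Fk k.+1 q.1 && ((q.2, i) \in q.1)) wt a q.1 * ((i == j)%:R - (inT q.1 i j)%:R).
Proof.
rewrite L_Q /Sg mulr_suml -sumrB.
have -> : \sum_(q | Fk k.+1 q.1 && ((q.2, i) \in q.1)) wt a q.1 * ((i == j)%:R - (inT q.1 i j)%:R)
  = \sum_(F | Fk k.+1 F) \sum_(l | (l, i) \in F) wt a F * ((i == j)%:R - (inT F i j)%:R).
  by rewrite pair_big_dep.
apply: eq_bigr => F /andP [/and3P [sg ind hr] _].
rewrite -mulrBr.
case: (boolP (isroot F i)) => ri.
- rewrite big_pred0; last by move=> l; rewrite isrootP.
  by rewrite inT_root // eq_sym subrr mulr0.
- rewrite (big_pred1 (par F i)) // => l; apply/idP/eqP => [H|->].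
    by rewrite (parP ind H).
  exact: nonroot_par.
Qed.

Lemma setU1K_eq (A : {set T * T}) e : (e |: A) :\ e == A = (e \notin A).
Proof.
apply/eqP/idP => [H|H]; last by rewrite setU1K.
by apply/negP => eA; move: (eA); rewrite -H !inE eqxx.
Qed.

Definition DA k i (q : {set T * T} * T) :=
  [&& Fk k q.1, q.2 != i, 0 < a i q.2, isroot q.1 i & ~~ connect (darc q.1) i q.2].

Lemma L_A k i j :
  \sum_(q | Fk k.+1 q.1 && ((q.2, i) \in q.1)) wt a q.1 * ((i == j)%:R - (inT q.1 i j)%:R) =
  \sum_(q | DA k i q) gg i j q.
Proof.
rewrite (reindex_onto (fun q : {set T * T} * T => ((q.2, i) |: q.1, q.2))
                      (fun q : {set T * T} * T => (q.1 :\ (q.2, i), q.2))) /=; last first.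
  by move=> [G l] /= /andP [_ H]; rewrite setD1K.
have peq : forall q : {set T * T} * T,
    (Fk k.+1 ((q.2, i) |: q.1) && ((q.2, i) \in (q.2, i) |: q.1)) &&
    ((((q.2, i) |: q.1) :\ (q.2, i), q.2) == q) = DA k i q.
  move=> [F l] /=.
  rewrite xpair_eqE eqxx andbT setU1K_eq setU11 andbT /DA /=.
  apply/idP/idP.
  + case/andP=> /andP [pG /eqP cG] nF.
    case: (pf_del pG (setU11 _ _)); rewrite setU1K // => pF rF nc pos li.
    rewrite /Fk pF /= li pos rF nc !andbT /=.
    by move: cG; rewrite cardsU1 nF add1n => -[->].
  + move=> /and5P [/andP [pF /eqP cF] li pos rF nc].
    have nF : (l, i) \notin F by rewrite isrootP.
    by rewrite /Fk pf_add // cardsU1 nF cF add1n eqxx.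
apply: eq_big => [q|[F l]]; first exact: peq.
rewrite peq /DA /= => /and5P [/andP [pF _] li pos rF nc].
have nF : (l, i) \notin F by rewrite isrootP.
case/and3P: (pF) => _ ind _.
rewrite /gg /= wt_add // inT_add // (@inT_root _ F i j rF) eq_sym.
by rewrite mulrA.
Qed.

End G5.

Section G6.
Local Open Scope ring_scope.
Variable n : nat.
Local Notation T := 'I_n.
Implicit Types (F G : {set T * T}) (x y z u v : T).
Variable R : numDomainType.
Variable a : 'M[R]_n.
Hypothesis ha : forall i j, 0 <= a i j.

Definition DB k i (q : {set T * T} * T) :=
  [&& Fk a k q.1, q.2 != i, 0 < a i q.2 & ~~ isroot q.1 i].
Definition SS k i (q : {set T * T} * T) :=
  [&& DB k i q, ~~ connect (darc q.1) i q.2 & q.2 != par q.1 i].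
Definition phi k i (q : {set T * T} * T) :=
  if SS k i q then (swp q.1 i q.2, par q.1 i) else q.

Lemma SS_props k i j q : SS k i q ->
  [/\ SS k i (phi k i q), phi k i (phi k i q) = q & gg a i j (phi k i q) = - gg a i j q].
Proof.
case: q => F l /[dup] Sq /and3P [/and4P [/andP [pF /eqP cF] li pos nr] nc lp].
rewrite /phi Sq /=.
set p := par F i.
have piF : (p, i) \in F by apply: nonroot_par.
case: (swap_props pF piF nc pos lp) => [[pF2 liF2 nc2 parF2 back] [card inTi inTp]].
case: (pf_del pF piF) => _ _ _ posp pi.
have S2 : SS k i (swp F i l, p).
  rewrite /SS /DB /Fk /= pF2 card cF eqxx pi posp nc2 parF2 eq_sym lp /= andbT.
  by apply/negP => r2; rewrite isrootP in liF2.
split => //; first by rewrite S2 /= back parF2.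
rewrite /gg /= inTi inTp.
case/and3P: pF => _ ind _.
set F0 := F :\ (p, i).
have lF0 : (l, i) \notin F0.
  apply/negP => /(subsetP (subsetDl F [set (p, i)])) H.
  by rewrite (indeg1P ind H piF) eqxx in lp.
have wF : wt a F = a i p * wt a F0 by rewrite -wt_add ?setD11 // setD1K.
have wF2 : wt a (swp F i l) = a i l * wt a F0 by rewrite /swp -/p wt_add.
rewrite wF wF2 -opprB !mulrN; congr (- _).
rewrite !mulrA; congr (_ * _ * _).
by rewrite mulrC.
Qed.

Lemma phi_invol k i : involutive (phi k i).
Proof.
move=> q; case: (boolP (SS k i q)) => Sq.
- by case: (SS_props i Sq).
- by rewrite /phi (negbTE Sq) (negbTE Sq).
Qed.

Lemma DB_phi k i q : DB k i (phi k i q) = DB k i q.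
Proof.
case: (boolP (SS k i q)) => Sq.
- case: (SS_props i Sq) => S2 _ _.
  by case/andP: S2 => -> _; case/andP: Sq => ->.
- by rewrite /phi (negbTE Sq).
Qed.

Lemma gg_phi k i j q : DB k i q -> gg a i j (phi k i q) = - gg a i j q.
Proof.
move=> Dq; case: (boolP (SS k i q)) => Sq; first by case: (SS_props j Sq).
rewrite /phi (negbTE Sq).
case: q Dq Sq => F l Dq Sq.
case/and4P: (Dq) => /andP [pF _] li pos nr.
case/and3P: (pF) => _ ind hr.
have : inT F l j = inT F i j.
  case: (boolP (connect (darc F) i l)) => c.
    exact: (inT_conn _ ind hr c).
  case: (eqVneq l (par F i)) => [e|ne].
    apply/esym; apply: (inT_conn _ ind hr); apply: connect1.
    by rewrite /darc e; apply: nonroot_par.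
  by move: Sq; rewrite /SS Dq c ne.
move=> e; rewrite /gg /= e subrr !mulr0 oppr0 //.
Qed.

Lemma L_B k i j : \sum_(q | DB k i q) gg a i j q = 0.
Proof.
set S := \sum_(q | DB k i q) gg a i j q.
have SS' : S = - S.
  rewrite {1}/S (reindex_inj (inv_inj (phi_invol k i))) /= -sumrN.
  apply: eq_big => [q|q Dq]; first by rewrite DB_phi.
  by rewrite DB_phi in Dq; apply: gg_phi.
have : S *+ 2 == 0 by rewrite mulr2n {1}SS' addNr.
by rewrite mulrn_eq0 /= => /eqP.
Qed.

Lemma recursion k i j : Sg a k.+1 * (i == j)%:R - Qk a k.+1 i j =
  \sum_(l | l != i) a i l * (Qk a k i j - Qk a k l j).
Proof.
rewrite L_LHS L_A L_RHS.
rewrite [RHS](bigID (fun q => 0 < a i q.2)) /=.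
rewrite [X in _ = _ + X]big1 ?addr0; last first.
  move=> [F l] /= /andP [_ H]; rewrite /gg /=.
  have -> : a i l = 0 by apply/eqP; move: H; rewrite lt_def ha andbT negbK.
  by rewrite mul0r.
rewrite [RHS](bigID (fun q => isroot q.1 i)) /=.
rewrite [X in _ = _ + X](_ : _ = 0) ?addr0; last first.
  by apply: etrans (L_B k i j); apply: eq_bigl => q; rewrite /DB !andbA.
rewrite [RHS](bigID (fun q => ~~ connect (darc q.1) i q.2)) /=.
rewrite [X in _ = _ + X]big1 ?addr0; last first.
  move=> [F l] /= /andP [/andP [/andP [/andP [/andP [pF _] _] _] _] c].
  case/and3P: pF => _ ind hr; rewrite negbK in c.
  by rewrite /gg /= (inT_conn _ ind hr c) subrr !mulr0.
by apply: eq_bigl => q; rewrite /DA !andbA.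
Qed.

End G6.

Section G7.
Local Open Scope ring_scope.
Variable n : nat.
Local Notation T := 'I_n.
Implicit Types (F G : {set T * T}) (x y z u v : T).
Variable R : numFieldType.
Variable a : 'M[R]_n.
Hypothesis ha : forall i j, 0 <= a i j.

Definition nu := (\max_(F | pf a F) #|F|)%N.

Lemma pf_set0 : pf a set0.
Proof.
rewrite /pf; apply/and3P; split.
- by apply/forallP => e; rewrite in_set0.
- by apply/forallP => y; apply/forallP => x; apply/forallP => x'; rewrite in_set0.
- apply/forallP => v; apply/existsP; exists v; rewrite connect0 andbT.
  by apply/forallP => x; rewrite in_set0.
Qed.

Lemma max_iff F : max_out_forest a F = Fk a nu F.
Proof.
rewrite /max_out_forest out_forest_pf /Fk; case pF: (pf a F) => //=.
apply/forallP/eqP => [H|->].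
- apply/eqP; rewrite eqn_leq leq_bigmax_cond //=.
  by apply/bigmax_leqP => G pG; move: (H G); rewrite out_forest_pf pG.
- move=> G; rewrite out_forest_pf; apply/implyP => pG.
  exact: leq_bigmax_cond.
Qed.

Lemma Fk_none F : Fk a nu.+1 F = false.
Proof.
rewrite /Fk; case pF: (pf a F) => //=; apply/negP => /eqP c.
by have := @leq_bigmax_cond _ (fun G => pf a G) (fun G => #|G|) F pF; rewrite c -/nu ltnn.
Qed.

Lemma wt_pos F : subgraphb a F -> 0 < wt a F.
Proof.
move=> /forallP sg; apply: prodr_gt0 => e eF; exact: (implyP (sg e) eF).
Qed.

Lemma Sg_pos : 0 < Sg a nu.
Proof.
have : (0 < #|[pred F | pf a F]|)%N by apply/card_gt0P; exists set0; rewrite inE pf_set0.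
case/(eq_bigmax_cond (fun F : {set T * T} => #|F|)) => F0 pF0 e.
have FF0 : Fk a nu F0.
  by rewrite /Fk; move: pF0; rewrite inE => ->; rewrite /nu -e /= eqxx.
rewrite /Sg (bigD1 F0) //=; apply: lt_le_trans (_ : wt a F0 <= _).
  by apply: wt_pos; move: pF0; rewrite inE => /and3P [].
rewrite lerDl; apply: sumr_ge0 => F /andP [/andP [pF _] _].
by apply/ltW/wt_pos; case/and3P: pF.
Qed.

Definition Qm k : 'M[R]_n := \matrix_(i, j) Qk a k i j.

Lemma LQ k i j : (kirchhoff a *m Qm k) i j =
  \sum_(l | l != i) a i l * (Qk a k i j - Qk a k l j).
Proof.
rewrite mxE (bigD1 i) //= /kirchhoff /Qm !mxE eqxx mulr_suml.
rewrite [X in _ + X](eq_bigr (fun l => - (a i l * Qk a k l j))) => [|l li]; last first.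
  by rewrite !mxE (negbTE (_ : i != l)) ?mulNr // eq_sym.
rewrite sumrN -sumrB; apply: eq_bigr => l _; by rewrite mulrBr.
Qed.

Lemma inT_set0 i j : inT (set0 : {set T * T}) i j = (j == i).
Proof.
rewrite /inT; have -> : isroot set0 j by apply/forallP => x; rewrite in_set0.
apply/idP/eqP => [c|->]; last exact: connect0.
apply/eqP; apply/negP => /negP ne.
by case: (connect_last c ne) => z [_]; rewrite /darc in_set0.
Qed.

Lemma Fk0 F : Fk a 0 F = (F == set0).
Proof.
rewrite /Fk cards_eq0; case: eqP => [->|_]; by rewrite ?pf_set0 ?andbF.
Qed.

Lemma Qm0 : Qm 0 = 1%:M.
Proof.
apply/matrixP => i j; rewrite !mxE /Qk.
rewrite (eq_bigl (fun F => (F == set0) && (i == j))) => [|F]; last first.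
  rewrite Fk0; case: eqP => [->|] //=; by rewrite inT_set0 eq_sym.
case: eqP => [_|_] /=.
- by rewrite (big_pred1 set0) => [|F]; rewrite /wt ?big_set0 // andbT.
- by rewrite big_pred0 // => F; rewrite andbF.
Qed.

Lemma Sg0 : Sg a 0 = 1.
Proof.
rewrite /Sg (big_pred1 set0) => [|F]; first by rewrite /wt big_set0.
by rewrite Fk0.
Qed.

Lemma Jbar_eq : Jbar a = (Sg a nu)^-1 *: Qm nu.
Proof.
apply/matrixP => i j; rewrite !mxE mulrC /Sg /Qk.
congr (_ * _).
  by congr (_^-1); apply: eq_bigl => F; rewrite max_iff.
apply: eq_bigl => F; rewrite max_iff; case FF: (Fk a nu F) => //=.
by case/andP: FF => /and3P [_ ind hr] _; rewrite in_tree_inT.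
Qed.

Lemma LJ : kirchhoff a *m Jbar a = 0.
Proof.
rewrite Jbar_eq -scalemxAr.
have -> : kirchhoff a *m Qm nu = 0; last by rewrite scaler0.
apply/matrixP => i j; rewrite LQ -recursion // mxE.
rewrite /Sg /Qk !big_pred0 => [|F|F]; rewrite ?Fk_none //.
by rewrite mul0r subrr.
Qed.

Lemma IJ : exists X, 1%:M - Jbar a = kirchhoff a *m X.
Proof.
have S0 : Sg a nu != 0 by rewrite gt_eqF // Sg_pos.
case E : nu => [|k].
- exists 0; rewrite mulmx0 Jbar_eq E Qm0 Sg0 invr1 scale1r subrr //.
- exists ((Sg a nu)^-1 *: Qm k).
  rewrite -scalemxAr Jbar_eq.
  have -> : kirchhoff a *m Qm k = Sg a nu *: 1%:M - Qm nu.
    apply/matrixP => i j; rewrite LQ -recursion // !mxE E.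
    by rewrite mulr_natr.
  by rewrite scalerBr scalerA mulVf // scale1r.
Qed.

End G7.
Local Open Scope ring_scope.
Section Ces.
Variables (R : archiRealFieldType) (n : nat) (P J X L : 'M[R]_n) (eps : R).
Hypotheses (heps : 0 < eps) (hPdef : P = 1%:M - eps *: L) (hst : row_stochastic P)
  (hLJ : L *m J = 0) (hX : 1%:M - J = L *m X).

Lemma PJ : P *m J = J.
Proof. by rewrite hPdef mulmxBl mul1mx -scalemxAl hLJ scaler0 subr0. Qed.

Lemma PkJ k : P ^+ k *m J = J.
Proof.
elim: k => [|k IH]; first by rewrite expr0 -idmxE mul1mx.
by rewrite exprSr -mulmxE -mulmxA PJ.
Qed.

Lemma stoch_pow k : row_stochastic (P ^+ k).
Proof.
case: hst => h0 h1.
elim: k => [|k [IH0 IH1]].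
  rewrite expr0 -idmxE; split => [i j|i]; rewrite ?mxE ?ler0n //.
  rewrite (bigD1 i) //= big1 ?addr0 => [|j ji]; rewrite !mxE ?eqxx //.
  by rewrite eq_sym (negbTE ji).
rewrite exprSr -mulmxE; split => [i j|i].
  by rewrite mxE; apply: sumr_ge0 => l _; apply: mulr_ge0.
under eq_bigr do rewrite mxE.
rewrite exchange_big /= -(IH1 i); apply: eq_bigr => l _.
by rewrite -mulr_sumr h1 mulr1.
Qed.

Lemma entry_le1 (A : 'M[R]_n) : row_stochastic A -> forall i j, `|A i j| <= 1.
Proof.
case=> h0 h1 i j; rewrite ger0_norm // -(h1 i) (bigD1 j) //= lerDl.
by apply: sumr_ge0.
Qed.

Lemma epsL : eps *: L = 1%:M - P.
Proof. by rewrite hPdef opprB addrC subrK. Qed.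

Lemma cesaro_diff m : (0 < m)%N ->
  cesaro_mean P m - J = (m%:R * eps)^-1 *: ((P - P ^+ m.+1) *m X).
Proof.
move=> m0.
set S := \sum_(1 <= k < m.+1) P ^+ k.
have SJ : S *m J = J *+ m.
  rewrite /S mulmx_suml (eq_bigr (fun _ => J)) => [|k _]; last exact: PkJ.
  by rewrite sumr_const_nat subn1.
have SL : S *m L = eps^-1 *: (P - P ^+ m.+1).
  apply: (@scalerI _ _ eps); first by rewrite gt_eqF.
  rewrite scalerA mulfV ?gt_eqF // scale1r scalemxAr epsL.
  rewrite /S mulmx_suml.
  rewrite (eq_bigr (fun k => P ^+ k - P ^+ k.+1)) => [|k _]; last first.
    by rewrite mulmxBr mulmx1 mulmxE exprSr.
  have := @telescope_sumr _ 1 m.+1 (fun k => - P ^+ k) erefl.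
  rewrite /= expr1 opprK addrC => <-; apply: eq_bigr => k _.
  by rewrite opprK addrC.
have mne : m%:R != 0 :> R by rewrite pnatr_eq0 -lt0n.
rewrite /cesaro_mean -/S.
have -> : J = m%:R^-1 *: (S *m J) by rewrite SJ -scaler_nat scalerA mulVf // scale1r.
rewrite -scalerBr -{1}(mulmx1 S) -mulmxBr hX mulmxA SL -scalemxAl scalerA.
by rewrite invfM mulrC.
Qed.

Lemma cesaro_gen : cesaro_limit P J.
Proof.
move=> e e0.
set B := \sum_l \sum_j `|X l j|.
have B0 : 0 <= B by apply: sumr_ge0 => l _; apply: sumr_ge0 => j _.
set c := (2 * B + 1) / (eps * e).
have c0 : 0 <= c by apply: divr_ge0; [apply: addr_ge0; [apply: mulr_ge0|]|apply: mulr_ge0; apply: ltW].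
exists (Num.bound c) => m Nm i j.
have m0 : (0 < m)%N by apply: leq_ltn_trans Nm.
have mpos : 0 < m%:R :> R by rewrite ltr0n.
have cm : c < m%:R.
  apply: lt_trans (archi_boundP c0) _; by rewrite ltr_nat.
have -> : cesaro_mean P m i j - J i j = (cesaro_mean P m - J) i j by rewrite !mxE.
rewrite cesaro_diff // mxE.
rewrite normrM ger0_norm; last by rewrite invr_ge0 mulr_ge0 // ltW.
have bound : `|((P - P ^+ m.+1) *m X) i j| <= 2 * B.
  rewrite mxE; apply: le_trans (ler_norm_sum _ _ _) _.
  rewrite mulr_sumr; apply: ler_sum => l _.
  rewrite normrM mxE.
  have d2 : `|P i l - (P ^+ m.+1) i l| <= 2.
    apply: le_trans (ler_normB _ _) _.
    have -> : (2:R) = 1 + 1 by [].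
    by apply: lerD; [apply: entry_le1|apply: entry_le1; apply: stoch_pow].
  apply: ler_pM; [exact: normr_ge0 | exact: normr_ge0 | by rewrite mxE | ].
  rewrite (bigD1 j) //= lerDl.
  by apply: sumr_ge0.
apply: le_lt_trans (ler_wpM2l _ bound) _; first by rewrite invr_ge0 mulr_ge0 // ltW.
rewrite ltr_pdivrMl ?mulr_gt0 //.
have : (2 * B + 1) / (eps * e) < m%:R by [].
rewrite ltr_pdivrMr ?mulr_gt0 // => H.
apply: (@lt_trans _ _ (2 * B + 1)); first by rewrite ltrDl ltr01.
by rewrite -mulrA.
Qed.

End Ces.

Unset Implicit Arguments.

Theorem proposition8 (R : archiRealFieldType) (n : nat) (a : 'M[R]_n)
  (ha_nonneg : forall i j, 0 <= a i j) (ha_loop : forall i, a i i = 0)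
  (eps : R) (heps : 0 < eps)
  (hP : row_stochastic (1%:M - eps *: kirchhoff a)) :
  cesaro_limit (1%:M - eps *: kirchhoff a) (Jbar a).
Proof.
have [X hX] := IJ ha_nonneg.
exact: (cesaro_gen heps erefl hP (LJ ha_nonneg) hX).
Qed.
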